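(* Let $\mathcal{K}$ be a continuous unitary representation of $\overline{\mathfrak{S}}_\infty$ in a Hilbert space $\mathcal{H}$ and let $k\in\mathbb{N}$. Then the sequence $\{\mathcal{K}((k\;\;N))\}_{N\in\mathbb{N},\,N\neq k}$ converges, as $N\to\infty$, in the weak operator topology to a self-adjoint projection $O_k$.
   Context: $\overline{\mathfrak{S}}_\infty$ is the group of all bijections of $\mathbb{N}$, with the Polish topology in which the subgroups $\mathfrak{S}(n,\infty)=\{s: s(j)=j \text{ for } j=1,\dots,n\}$ form a fundamental system of neighborhoods of the identity; continuity of $\mathcal{K}$ means $\lim_{n\to\infty}\sup_{s\in\mathfrak{S}(n,\infty)}\|\mathcal{K}(s)\eta-\eta\|=0$ for each $\eta\in\mathcal{H}$. $(k\;N)$ denotes the transposition interchanging $k$ and $N$. *)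

(* Defs.v *)
From mathcomp Require Import all_boot all_algebra.
From mathcomp Require Import reals.
From mathcomp Require Export complex.
Import GRing.Theory Num.Theory.
Set Implicit Arguments. Unset Strict Implicit. Unset Printing Implicit Defensive.
Local Open Scope ring_scope.

Section Hilbert.
Variables (R : realType) (H : lmodType R[i]).

Record is_inner_product (ip : H -> H -> R[i]) : Prop := {
  ip_linl : forall (a : R[i]) (x y z : H), ip (a *: x + y) z = a * ip x z + ip y z;
  ip_conjsym : forall x y : H, ip y x = ((ip x y)^*)%C;
  ip_ge0 : forall x : H, 0 <= ip x x;
  ip_def : forall x : H, ip x x = 0 -> x = 0 }.

Definition hnorm (ip : H -> H -> R[i]) (x : H) : R := Num.sqrt (complex.Re (ip x x)).

Definition hcomplete (ip : H -> H -> R[i]) : Prop :=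
  forall u : nat -> H,
    (forall eps : R, 0 < eps -> exists M, forall m n, (M <= m)%N -> (M <= n)%N ->
        hnorm ip (u m - u n) < eps) ->
    exists l : H, forall eps : R, 0 < eps -> exists M, forall n, (M <= n)%N ->
        hnorm ip (u n - l) < eps.

Definition is_hilbert (ip : H -> H -> R[i]) : Prop :=
  is_inner_product ip /\ hcomplete ip.

Definition is_linear_op (T : H -> H) : Prop :=
  forall (a : R[i]) (x y : H), T (a *: x + y) = a *: T x + T y.

Definition unitary (ip : H -> H -> R[i]) (U : H -> H) : Prop :=
  [/\ is_linear_op U, forall x y, ip (U x) (U y) = ip x y
    & forall y, exists x, U x = y].

(* Elements of the infinite symmetric group (all bijections of nat) are
   bijective functions nat -> nat; a representation K is given on them. *)
Definition unitary_rep (ip : H -> H -> R[i]) (K : (nat -> nat) -> H -> H) : Prop :=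
  [/\ forall s, bijective s -> unitary ip (K s),
      K id = id
    & forall s t, bijective s -> bijective t -> K (s \o t) = K s \o K t].

(* continuity w.r.t. the topology with neighbourhood base S(n,oo) =
   {s | s j = j for j = 0..n-1}:  lim_n sup_{s in S(n,oo)} ||K s eta - eta|| = 0 *)
Definition rep_continuous (ip : H -> H -> R[i]) (K : (nat -> nat) -> H -> H) : Prop :=
  forall (eta : H) (eps : R), 0 < eps -> exists n : nat,
    forall s, bijective s -> (forall j, (j < n)%N -> s j = j) ->
      hnorm ip (K s eta - eta) <= eps.

Definition sa_projection (ip : H -> H -> R[i]) (O : H -> H) : Prop :=
  [/\ is_linear_op O, forall x, O (O x) = O x
    & forall x y, ip (O x) y = ip x (O y)].

Definition wot_converges_away (ip : H -> H -> R[i]) (k : nat)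
    (T : nat -> H -> H) (O : H -> H) : Prop :=
  forall (x y : H) (eps : R), 0 < eps -> exists N0 : nat,
    forall N, (N0 <= N)%N -> N != k -> `|ip (T N x) y - ip (O x) y| < eps%:C%C.

End Hilbert.

Definition transp (k N : nat) : nat -> nat :=
  fun j => if j == k then N else if j == N then k else j.

(* Main.v *)
Require Import Defs.
From mathcomp Require Import all_boot all_order all_algebra.
From mathcomp Require Import reals complex ring zify lra.
From Stdlib Require Import FunctionalExtensionality ClassicalEpsilon.
Import Order.TTheory GRing.Theory Num.Theory.
Local Open Scope ring_scope.

Module Aux.
Set Implicit Arguments. Unset Strict Implicit. Unset Printing Implicit Defensive.

Ltac trcase := repeat (match goal with
  | |- context [?x == ?y] => is_var x; is_var y;
     let h := fresh "h" in case: (boolP (x == y)) => h /=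
  end);
  repeat match goal with
  | h : is_true (_ == _) |- _ => move/eqP: h => h
  | h : is_true (~~ (_ == _)) |- _ => move/eqP: h => h
  end; lia.
Ltac trsolve := let j := fresh "j" in
  apply: functional_extensionality => j; rewrite /transp /comp; trcase.

Lemma transpK a b : transp a b \o transp a b = id.
Proof. trsolve. Qed.

Lemma transp_bij a b : bijective (transp a b).
Proof. by exists (transp a b) => j; have := transpK a b => /(congr1 (fun f => f j)). Qed.

Lemma transp_conj k N M : N <> k -> M <> k ->
  transp k M = transp N M \o (transp k N \o transp N M).
Proof. move=> *; trsolve. Qed.

Lemma transp_comm k i j j' : k <> j -> k <> j' -> i <> j -> i <> j' ->
  transp k i = transp j j' \o (transp k i \o transp j j').
Proof. move=> *; trsolve. Qed.

Lemma transp_sigma k N M : N <> k -> M <> k -> N <> M ->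
  transp k N \o transp k M = transp k M \o transp N M.
Proof. move=> *; trsolve. Qed.

Lemma transp_fix a b n j : (n <= a)%N -> (n <= b)%N -> (j < n)%N -> transp a b j = j.
Proof. move=> *; rewrite /transp; trcase. Qed.

Local Open Scope ring_scope.
Local Open Scope complex_scope.

Section Basic.
Variables (R : realType) (H : lmodType R[i]) (ip : H -> H -> R[i]).
Hypothesis IP : is_inner_product ip.

Definition nc (z : R[i]) : R := complex.Re `|z|.

Lemma normE (z : R[i]) : `|z| = (nc z)%:C.
Proof. by rewrite /nc normc_def. Qed.

Lemma nc_ge0 z : 0 <= nc z.
Proof. by rewrite -(@lecR R) rmorph0 -normE. Qed.

Lemma ncD a b : nc (a + b) <= nc a + nc b.
Proof. by rewrite -(@lecR R) rmorphD /= -!normE ler_normD. Qed.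

Lemma ncN a : nc (- a) = nc a.
Proof. by rewrite /nc normrN. Qed.

Lemma ncB a b : nc (a - b) = nc (b - a).
Proof. by rewrite -ncN opprB. Qed.

Lemma ncM a b : nc (a * b) = nc a * nc b.
Proof. by apply: complexI; rewrite rmorphM /= -!normE normrM. Qed.

Lemma ncJ a : nc (conjc a) = nc a.
Proof. by rewrite /nc normcJ. Qed.

Lemma ncR (r : R) : nc (r%:C) = `|r|.
Proof. by apply: complexI; rewrite -normE normc_def /= expr0n /= addr0 sqrtr_sqr. Qed.

Lemma nc_sum (I : Type) (r : seq I) (F : I -> R[i]) :
  nc (\sum_(i <- r) F i) <= \sum_(i <- r) nc (F i).
Proof.
rewrite -(@lecR R) -normE (big_morph (real_complex R) (fun x y => rmorphD _ x y) (rmorph0 _)).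
by apply: le_trans (ler_norm_sum _ _ _) _; apply: ler_sum => i _; rewrite normE.
Qed.

Lemma ip0l z : ip 0 z = 0.
Proof.
have := ip_linl IP 1 0 0 z; rewrite scaler0 addr0 mul1r => /eqP.
by rewrite -subr_eq0 opprD addrA subrr add0r oppr_eq0 => /eqP.
Qed.
Lemma ipDl x y z : ip (x + y) z = ip x z + ip y z.
Proof. by rewrite -[x in LHS]scale1r (ip_linl IP) mul1r. Qed.
Lemma ipZl a x z : ip (a *: x) z = a * ip x z.
Proof. by rewrite -[a *: x]addr0 (ip_linl IP) ip0l addr0. Qed.
Lemma ipNl x z : ip (- x) z = - ip x z.
Proof. by rewrite -scaleN1r ipZl mulN1r. Qed.
Lemma ipBl x y z : ip (x - y) z = ip x z - ip y z.
Proof. by rewrite ipDl ipNl. Qed.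
Lemma ipDr x y z : ip z (x + y) = ip z x + ip z y.
Proof. by rewrite (ip_conjsym IP) ipDl rmorphD /= -!(ip_conjsym IP). Qed.
Lemma ipZr a x z : ip z (a *: x) = conjc a * ip z x.
Proof. by rewrite (ip_conjsym IP) ipZl rmorphM /= -!(ip_conjsym IP). Qed.
Lemma ip0r z : ip z 0 = 0.
Proof. by rewrite (ip_conjsym IP) ip0l rmorph0. Qed.
Lemma ipNr x z : ip z (- x) = - ip z x.
Proof. by rewrite (ip_conjsym IP) ipNl rmorphN /= -!(ip_conjsym IP). Qed.
Lemma ipBr x y z : ip z (x - y) = ip z x - ip z y.
Proof. by rewrite ipDr ipNr. Qed.
Lemma ip_suml (I : Type) (r : seq I) (F : I -> H) z :
  ip (\sum_(i <- r) F i) z = \sum_(i <- r) ip (F i) z.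
Proof. exact: (big_morph (ip^~ z) (fun x y => ipDl x y z) (ip0l z)). Qed.
Lemma ip_sumr (I : Type) (r : seq I) (F : I -> H) z :
  ip z (\sum_(i <- r) F i) = \sum_(i <- r) ip z (F i).
Proof. exact: (big_morph (ip z) (fun x y => ipDr x y z) (ip0r z)). Qed.

Lemma ipxx x : ip x x = (complex.Re (ip x x))%:C.
Proof. by rewrite RRe_real // realE (ip_ge0 IP). Qed.
Lemma Re_ipxx_ge0 x : 0 <= complex.Re (ip x x).
Proof. by rewrite -(@lecR R) -ipxx (ip_ge0 IP). Qed.
Lemma hnorm_ge0 x : 0 <= hnorm ip x.
Proof. exact: sqrtr_ge0. Qed.
Lemma hnorm_sq x : (hnorm ip x) ^+ 2 = complex.Re (ip x x).
Proof. by rewrite /hnorm sqr_sqrtr // Re_ipxx_ge0. Qed.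
Lemma ipxx_hn x : ip x x = ((hnorm ip x) ^+ 2)%:C.
Proof. by rewrite hnorm_sq -ipxx. Qed.

Lemma conjcM (x y : R[i]) : (x * y)^* = x^* * y^*.
Proof. exact: rmorphM. Qed.
Lemma conjcV (x : R[i]) : (x^-1)^* = (x^*)^-1.
Proof. exact: fmorphV. Qed.

Lemma ipJ x y : ip y x = conjc (ip x y).
Proof. exact: (ip_conjsym IP). Qed.

Lemma CS2 a b : `|ip a b| ^+ 2 <= ip a a * ip b b.
Proof.
have [hb|hb] := eqVneq (ip b b) 0.
  by rewrite ((ip_def IP) _ hb) !ip0r normr0 expr0n /= mulr0.
have bpos : 0 < ip b b by rewrite lt_def hb (ip_ge0 IP).
have bJ : conjc (ip b b) = ip b b by rewrite -ipJ.
have E : ip (ip b b *: a - ip a b *: b) (ip b b *: a - ip a b *: b)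
   = ip b b * (ip b b * ip a a - ip a b * conjc (ip a b)).
  rewrite !ipBl !ipBr !ipZl !ipZr bJ (ipJ a b); ring.
have := ip_ge0 IP (ip b b *: a - ip a b *: b); rewrite E pmulr_rge0 //.
rewrite subr_ge0 => h; rewrite sqr_normc [ip a a * _]mulrC; exact: h.
Qed.

Lemma CS a b : nc (ip a b) <= hnorm ip a * hnorm ip b.
Proof.
have := CS2 a b; rewrite normE !ipxx_hn -!rmorphXn -rmorphM (@lecR R) -exprMn.
by rewrite ler_pXn2r // ?nnegrE ?nc_ge0 // mulr_ge0 // hnorm_ge0.
Qed.

Lemma pert a a' b b' : nc (ip a' b' - ip a b) <=
  hnorm ip (a' - a) * hnorm ip b' + hnorm ip a * hnorm ip (b' - b).
Proof.
have -> : ip a' b' - ip a b = ip (a' - a) b' + ip a (b' - b).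
  by rewrite ipBl ipBr addrA subrK.
by apply: le_trans (ncD _ _) _; apply: lerD; apply: CS.
Qed.

Lemma Re_le_nc (z : R[i]) : complex.Re z <= nc z.
Proof. apply: le_trans (ler_norm _) _; rewrite -(@lecR R) -normE; exact: normc_ge_Re. Qed.

Lemma hn_lt x e : 0 < e -> complex.Re (ip x x) < e ^+ 2 -> hnorm ip x < e.
Proof.
move=> e0 h; rewrite /hnorm -[e](@ger0_norm _ e) ?ltW // -sqrtr_sqr ltr_sqrt //.
by rewrite exprn_gt0.
Qed.

Lemma ip_ext v w : (forall y, ip v y = ip w y) -> v = w.
Proof.
move=> h; apply/eqP; rewrite -subr_eq0; apply/eqP; apply: (ip_def IP).
by rewrite ipBl h subrr.
Qed.

Lemma nc_eq0 (z : R[i]) : nc z = 0 -> z = 0.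
Proof. by move=> h; apply/eqP; rewrite -normr_eq0 normE h. Qed.

Lemma small_eq0 (z : R[i]) : (forall e : R, 0 < e -> nc z < e) -> z = 0.
Proof.
move=> h; apply: nc_eq0; apply/eqP; rewrite eq_le nc_ge0 andbT.
by rewrite leNgt; apply/negP => /h; rewrite ltxx.
Qed.

Lemma nc_lt_C (z : R[i]) e : nc z < e -> `|z| < e%:C.
Proof. by rewrite normE (@ltcR R). Qed.

Lemma ncV_nat m : nc ((m%:R : R[i])^-1) = (m%:R : R)^-1.
Proof.
have -> : (m%:R : R[i])^-1 = ((m%:R : R)^-1)%:C by rewrite fmorphV rmorph_nat.
by rewrite ncR ger0_norm // invr_ge0 ler0n.
Qed.

Lemma conjcVn m : conjc ((m%:R : R[i])^-1) = (m%:R : R[i])^-1.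
Proof.
have -> : (m%:R : R[i])^-1 = ((m%:R : R)^-1)%:C by rewrite fmorphV rmorph_nat.
exact: conjc_real.
Qed.

End Basic.

Section Lin.
Variables (R : realType) (H : lmodType R[i]) (T : H -> H).
Hypothesis LT : is_linear_op T.
Lemma lin0 : T 0 = 0.
Proof.
have := LT 1 0 0; rewrite scaler0 addr0 scale1r => /eqP.
by rewrite -subr_eq0 opprD addrA subrr add0r oppr_eq0 => /eqP.
Qed.
Lemma linD x y : T (x + y) = T x + T y.
Proof. by rewrite -[x in LHS]scale1r LT scale1r. Qed.
Lemma linZ a x : T (a *: x) = a *: T x.
Proof. by rewrite -[a *: x]addr0 LT lin0 addr0. Qed.
Lemma linN x : T (- x) = - T x.
Proof. by rewrite -scaleN1r linZ scaleN1r. Qed.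
Lemma linB x y : T (x - y) = T x - T y.
Proof. by rewrite linD linN. Qed.
End Lin.

Lemma sum_ltn m n : (\sum_(i < m) ((i < n)%N : nat) <= n)%N.
Proof.
suff -> : (\sum_(i < m) ((i < n)%N : nat))%N = minn m n by apply: geq_minr.
elim: m => [|m IH]; first by rewrite big_ord0 min0n.
rewrite big_ord_recr /= IH; case: (ltnP m n) => h.
  by rewrite addn1; lia.
by rewrite addn0; lia.
Qed.

Lemma sum_eqn m p : (\sum_(i < m) ((nat_of_ord i == p) : nat) <= 1)%N.
Proof.
suff -> : (\sum_(i < m) ((nat_of_ord i == p) : nat))%N = (p < m)%N by case: (p < m)%N.
elim: m => [|m IH]; first by rewrite big_ord0.
rewrite big_ord_recr /= IH ltnS; case: (ltngtP p m) => //= h.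
Qed.

Section Avg.
Variable R : realType.

Lemma avg1 (f : nat -> R[i]) c (a b : R) n p m : (0 < m)%N -> 0 <= a -> 0 <= b ->
  (forall i, nc (f i - c) <= a + b * (((i < n)%N)%:R + (i == p)%:R)) ->
  nc ((m%:R)^-1 * \sum_(i < m) f i - c) <= a + b * n.+1%:R / m%:R.
Proof.
move=> m0 a0 b0 hf.
have mC : (m%:R : R[i]) != 0 by rewrite pnatr_eq0 -lt0n.
have mR : (m%:R : R) != 0 by rewrite pnatr_eq0 -lt0n.
have -> : (m%:R)^-1 * \sum_(i < m) f i - c = (m%:R)^-1 * \sum_(i < m) (f i - c).
  rewrite sumrB sumr_const card_ord mulrBr; congr (_ - _); apply: esym.
  by rewrite -[c *+ m]mulr_natl mulrA mulVf // mul1r.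
rewrite ncM ncV_nat.
have mi0 : 0 <= (m%:R : R)^-1 by rewrite invr_ge0 ler0n.
apply: le_trans.
  apply: (ler_wpM2l mi0); apply: le_trans (nc_sum _ _) _.
  apply: ler_sum => i _; exact: hf.
rewrite big_split /= sumr_const card_ord -mulr_sumr big_split /= -!natr_sum.
rewrite mulrDr -[a *+ m]mulr_natl mulrA mulVf // mul1r lerD2l.
rewrite [X in _ <= X]mulrC; apply: (ler_wpM2l mi0); apply: (ler_wpM2l b0).
by rewrite -natrD ler_nat -addn1 leq_add ?sum_ltn ?sum_eqn.
Qed.

Lemma bracket_ge0 (i n p : nat) : 0 <= (((i < n)%N)%:R + (i == p)%:R : R).
Proof. by rewrite addr_ge0 ?ler0n. Qed.

Lemma avg2 (f : nat -> nat -> R[i]) c (a b : R) n m m' :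
  (0 < m)%N -> (0 < m')%N -> 0 <= a -> 0 <= b ->
  (forall i j, nc (f i j - c) <= b) ->
  (forall i j, (n <= i)%N -> (n <= j)%N -> i != j -> nc (f i j - c) <= a) ->
  nc ((m%:R)^-1 * (m'%:R)^-1 * \sum_(i < m) \sum_(j < m') f i j - c)
    <= a + b * n.+1%:R / m'%:R + b * n.+1%:R / m%:R.
Proof.
move=> m0 m'0 a0 b0 hb ha.
have t0 : forall q : nat, 0 <= b * n.+1%:R / q%:R.
  by move=> q; rewrite mulr_ge0 ?invr_ge0 ?ler0n // mulr_ge0 ?ler0n.
rewrite -mulrA mulr_sumr.
apply: (avg1 (f := fun i : nat => (m'%:R)^-1 * \sum_(j < m') f i j) (p := 0%N)) => //; first by rewrite addr_ge0.
move=> i; case: (ltnP i n) => hi.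
  apply: le_trans (_ : b <= _).
    have := avg1 (f := f i) (c := c) (a := b) (b := 0) (n := n) (p := 0%N) m'0 b0 (lexx 0).
    rewrite mul0r mul0r !addr0; apply => j; rewrite mul0r addr0; exact: hb.
  rewrite /= -[b in b <= _]add0r lerD ?addr_ge0 //.
  by rewrite -[b in b <= _]mulr1 ler_wpM2l // lerDl ler0n.
apply: le_trans (_ : a + b * n.+1%:R / m'%:R <= _).
  apply: (avg1 (p := i)) => // j.
  case: (ltnP j n) => hj.
    apply: le_trans (hb i j) _ => /=.
    rewrite -[b in b <= _]add0r lerD // -[b in b <= _]mulr1 ler_wpM2l //.
    by rewrite lerDl ler0n.
  case: (eqVneq j i) => [->|hji].
    apply: le_trans (hb i i) _ => /=.
    rewrite -[b in b <= _]add0r lerD // -[b in b <= _]mulr1 ler_wpM2l //.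
    by rewrite lerDr ler0n.
  apply: le_trans (ha i j hi hj _) _; first by rewrite eq_sym.
  by rewrite /= addr0 mulr0 addr0.
by rewrite lerDl mulr_ge0 // add0r ler0n.
Qed.

End Avg.


Lemma conjcB (R : realType) (x y : R[i]) : conjc (x - y) = conjc x - conjc y.
Proof. exact: rmorphB. Qed.

Ltac bij := repeat apply: bij_comp; apply: transp_bij.

Section Main.
Variables (R : realType) (H : lmodType R[i]) (ip : H -> H -> R[i])
  (K : (nat -> nat) -> H -> H) (k : nat).
Hypotheses (IP : is_inner_product ip) (HC : hcomplete ip) (REP : unitary_rep ip K)
  (CONT : rep_continuous ip K).
Local Notation hn := (hnorm ip).
Local Notation T a b := (K (transp a b)).

Lemma T_unit a b : unitary ip (T a b).
Proof. by case: REP => h _ _; apply: h; apply: transp_bij. Qed.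
Lemma T_lin a b : is_linear_op (T a b).
Proof. by case: (T_unit a b). Qed.
Lemma T_ip a b x y : ip (T a b x) (T a b y) = ip x y.
Proof. by case: (T_unit a b). Qed.
Lemma T_hn a b x : hn (T a b x) = hn x.
Proof. by rewrite /hnorm T_ip. Qed.
Lemma Kcomp s t x : bijective s -> bijective t -> K (s \o t) x = K s (K t x).
Proof. by case: REP => _ _ h bs bt; rewrite h. Qed.
Lemma T_inv a b x : T a b (T a b x) = x.
Proof.
rewrite -Kcomp; [|bij|bij]; case: REP => _ hid _.
by rewrite -[X in _ = X]/(id x) -hid; congr (K _ x); exact: transpK.
Qed.
Lemma T_adj a b x y : ip (T a b x) y = ip x (T a b y).
Proof. by rewrite -{1}(T_inv a b y) T_ip. Qed.

Lemma bijT3 a b c d e f :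
  bijective (transp a b \o (transp c d \o transp e f)) /\ bijective (transp c d \o transp e f).
Proof. by split; repeat apply: bij_comp; apply: transp_bij. Qed.

Lemma T_conj N M x : N <> k -> M <> k -> T k M x = T N M (T k N (T N M x)).
Proof.
move=> hN hM; rewrite {1}(transp_conj hN hM).
by rewrite Kcomp; [rewrite Kcomp; [|bij|bij]|bij|bij].
Qed.

Lemma T_comm i j j' x : k <> j -> k <> j' -> i <> j -> i <> j' ->
  T k i x = T j j' (T k i (T j j' x)).
Proof.
move=> h1 h2 h3 h4; rewrite {1}(transp_comm h1 h2 h3 h4).
by rewrite Kcomp; [rewrite Kcomp; [|bij|bij]|bij|bij].
Qed.

Lemma T_sigma N M y : N <> k -> M <> k -> N <> M ->
  T k N (T k M y) = T k M (T N M y).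
Proof.
move=> h1 h2 h3; rewrite -Kcomp; [|bij|bij].
by rewrite (transp_sigma h1 h2 h3) Kcomp; [|bij|bij].
Qed.

Lemma cont' eta d : 0 < d -> exists n, (k < n)%N /\
  forall a b, (n <= a)%N -> (n <= b)%N -> hn (T a b eta - eta) <= d.
Proof.
move=> d0; have [n0 h] := CONT eta d0.
exists (maxn n0 k.+1); split; first by rewrite leq_max leqnn orbT.
move=> a b ha hb; apply: h; first exact: transp_bij.
move=> j hj; apply: (transp_fix (n := n0)) => //.
  by apply: leq_trans ha; rewrite leq_max leqnn.
by apply: leq_trans hb; rewrite leq_max leqnn.
Qed.

Lemma cont2 x y d : 0 < d -> exists n, (k < n)%N /\
  forall a b, (n <= a)%N -> (n <= b)%N ->
    hn (T a b x - x) <= d /\ hn (T a b y - y) <= d.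
Proof.
move=> d0; have [n1 [k1 h1]] := cont' x d0; have [n2 [k2 h2]] := cont' y d0.
exists (maxn n1 n2); split; first by rewrite leq_max k1.
move=> a b ha hb; rewrite !geq_max in ha hb.
by case/andP: ha => ??; case/andP: hb => ??; split; [apply: h1|apply: h2].
Qed.

Definition g x i j := ip (T k i x) (T k j x).

Lemma g_step x d n i j j' : (k < n)%N ->
  (forall a b, (n <= a)%N -> (n <= b)%N -> hn (T a b x - x) <= d) ->
  (n <= i)%N -> (n <= j)%N -> (n <= j')%N -> i <> j -> i <> j' ->
  nc (g x i j' - g x i j) <= d * hn x + hn x * d.
Proof.
move=> kn hc hi hj hj' ij ij'.
have nk : forall a, (n <= a)%N -> a <> k by move=> a ha ak; lia.
rewrite /g (T_conj (N := j) (M := j') x (nk j hj) (nk j' hj')).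
rewrite {1}(T_comm (i := i) (j := j) (j' := j') x) //; last 2 first.
  by move=> e; apply: (nk j hj); rewrite e.
  by move=> e; apply: (nk j' hj'); rewrite e.
rewrite T_ip; apply: le_trans (pert IP _ _ _ _) _.
rewrite -(linB (T_lin k i)) -(linB (T_lin k j)) !T_hn.
by apply: lerD; [apply: ler_wpM2r; [exact: hnorm_ge0|exact: hc]
                |apply: ler_wpM2l; [exact: hnorm_ge0|exact: hc]].
Qed.

Lemma g_sym x i j : g x i j = conjc (g x j i).
Proof. exact: (ipJ IP). Qed.

Lemma g_const x d n i j i' j' : (k < n)%N ->
  (forall a b, (n <= a)%N -> (n <= b)%N -> hn (T a b x - x) <= d) ->
  (n <= i)%N -> (n <= j)%N -> (n <= i')%N -> (n <= j')%N -> i <> j -> i' <> j' ->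
  nc (g x i j - g x i' j') <=
  (d * hn x + hn x * d) + (d * hn x + hn x * d) + (d * hn x + hn x * d).
Proof.
move=> kn hc hi hj hi' hj' ij ij'.
set m0 := (i + j + i' + j').+1.
have hm : (n <= m0)%N by rewrite /m0; lia.
have e1 : i <> m0 by rewrite /m0; lia.
have e2 : i' <> m0 by rewrite /m0; lia.
have -> : g x i j - g x i' j' =
  (g x i j - g x i m0) + (g x i m0 - g x i' m0) + (g x i' m0 - g x i' j').
  by rewrite !addrA subrK subrK.
apply: le_trans (ncD _ _) _; apply: lerD; last first.
  by rewrite ncB; apply: (g_step kn hc).
apply: le_trans (ncD _ _) _; apply: lerD.
  by rewrite ncB; apply: (g_step kn hc).
rewrite (g_sym x i) (g_sym x i') -conjcB ncJ.
by apply: (g_step kn hc) => // e; [apply: e2|apply: e1]; rewrite e.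
Qed.

Lemma g_bnd x i j : nc (g x i j) <= hn x ^+ 2.
Proof. by apply: le_trans (CS IP _ _) _; rewrite !T_hn expr2. Qed.

Definition S x m := (m%:R : R[i])^-1 *: \sum_(i < m) T k (k.+1 + i) x.

Lemma ipS x m m' : ip (S x m) (S x m') = (m%:R)^-1 * (m'%:R)^-1 *
  \sum_(i < m) \sum_(j < m') g x (k.+1 + i) (k.+1 + j).
Proof.
rewrite /S (ipZl IP) (ipZr IP) conjcVn mulrA; congr (_ * _).
by rewrite (ip_suml IP); apply: eq_bigr => i _; rewrite (ip_sumr IP).
Qed.

Lemma ipSy x y m : ip (S x m) y = (m%:R)^-1 * \sum_(i < m) ip (T k (k.+1 + i) x) y.
Proof. by rewrite /S (ipZl IP) (ip_suml IP). Qed.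

Lemma A_bnd x d n p q : (k < n)%N -> 0 <= d ->
  (forall a b, (n <= a)%N -> (n <= b)%N -> hn (T a b x - x) <= d) ->
  (0 < p)%N -> (0 < q)%N ->
  nc (ip (S x p) (S x q) - g x n n.+1) <=
   ((d * hn x + hn x * d) + (d * hn x + hn x * d) + (d * hn x + hn x * d))
   + (hn x ^+ 2 + hn x ^+ 2) * n.+1%:R / q%:R
   + (hn x ^+ 2 + hn x ^+ 2) * n.+1%:R / p%:R.
Proof.
move=> kn d0 hc p0 q0; rewrite ipS.
have hx0 := hnorm_ge0 ip x.
apply: (avg2 (f := fun i j => g x (k.+1 + i) (k.+1 + j))) => //.
- by rewrite !addr_ge0 // mulr_ge0.
- by rewrite addr_ge0 // exprn_ge0.
- move=> i j; apply: le_trans (ncD _ _) _; rewrite ncN.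
  by apply: lerD; apply: g_bnd.
- move=> i j hi hj hij; apply: (g_const kn hc) => //.
  + by apply: leq_trans hi _; rewrite addnC leq_addr.
  + by apply: leq_trans hj _; rewrite addnC leq_addr.
  + by move=> e; move/eqP: hij; apply; lia.
Qed.

Lemma S_cauchy x e : 0 < e -> exists M, forall m m', (M <= m)%N -> (M <= m')%N ->
  hn (S x m - S x m') < e.
Proof.
move=> e0; set hx := hn x.
have hx0 : 0 <= hx := hnorm_ge0 ip x.
have h1 : 0 < hx + 1 by apply: ltr_wpDl hx0 ltr01.
have h48 : 0 < 48%:R * (hx + 1) by rewrite mulr_gt0 ?ltr0n.
set d := e^+2 / (48%:R * (hx + 1)).
have d0 : 0 < d by rewrite divr_gt0 ?exprn_gt0.
have hd : d * (48%:R * (hx + 1)) = e^+2 by rewrite mulfVK // gt_eqF.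
have [n [kn hc]] := cont' x d0.
set b := hx ^+ 2 + hx ^+ 2; set N := (n.+1%:R : R).
have bN0 : 0 <= b * N by rewrite mulr_ge0 ?ler0n // addr_ge0 // exprn_ge0.
have e20 : 0 < e^+2 by rewrite exprn_gt0.
set r := 16%:R * (b * N) / e^+2.
have r0 : 0 <= r by apply: divr_ge0; [apply: mulr_ge0; rewrite ?ler0n|apply: ltW].
set M := (Num.Def.archi_bound r).+1.
exists M => m m' hm hm'.
have Mgt : r < M%:R.
  apply: lt_le_trans (archi_boundP r0) _; by rewrite ler_nat.
have Mpos : 0 < (M%:R : R) by rewrite ltr0n.
have hu : 16%:R * (b * N / M%:R) < e^+2.
  by move: Mgt; rewrite /r ltr_pdivrMr // => h; rewrite mulrA ltr_pdivrMr // [e ^+ 2 * _]mulrC.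
have bndp : forall p, (M <= p)%N -> b * N / p%:R <= b * N / M%:R.
  move=> p hp; apply: ler_wpM2l => //; rewrite lef_pV2 ?ler_nat ?posrE //.
  by rewrite ltr0n; apply: leq_trans hp.
have Ab : forall p q, (M <= p)%N -> (M <= q)%N ->
    nc (ip (S x p) (S x q) - g x n n.+1) <=
    ((d * hx + hx * d) + (d * hx + hx * d) + (d * hx + hx * d))
    + b * N / M%:R + b * N / M%:R.
  move=> p q hp hq.
  apply: le_trans (A_bnd kn (ltW d0) hc _ _) _; try by apply: leq_trans hp.
    by apply: leq_trans hq.
  by rewrite lerD ?lerD2l ?bndp.
apply: hn_lt => //.
set c := g x n n.+1.
have -> : ip (S x m - S x m') (S x m - S x m') =
   (ip (S x m) (S x m) - c) - (ip (S x m) (S x m') - c)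
   - (ip (S x m') (S x m) - c) + (ip (S x m') (S x m') - c).
  by rewrite !(ipBl IP) !(ipBr IP); ring.
apply: le_lt_trans (Re_le_nc _) _.
apply: le_lt_trans (ncD _ _) _.
apply: le_lt_trans (lerD (ncD _ _) (lexx _)) _; rewrite ncN.
apply: le_lt_trans (lerD (lerD (ncD _ _) (lexx _)) (lexx _)) _; rewrite ncN.
have hd' : 48%:R * (d * hx) + 48%:R * d = e^+2 by rewrite -hd; ring.
set u := b * N / M%:R in hu Ab.
have := Ab m m hm hm; have := Ab m m' hm hm'; have := Ab m' m hm' hm;
have := Ab m' m' hm' hm'; lra.
Qed.

Lemma S_lim x : exists v, forall e, 0 < e -> exists M, forall m, (M <= m)%N ->
  hn (S x m - v) < e.
Proof. exact: (HC (S_cauchy x)). Qed.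

Lemma a_step x y d n N M : (k < n)%N ->
  (forall a b, (n <= a)%N -> (n <= b)%N ->
    hn (T a b x - x) <= d /\ hn (T a b y - y) <= d) ->
  (n <= N)%N -> (n <= M)%N ->
  nc (ip (T k M x) y - ip (T k N x) y) <= d * hn y + hn x * d.
Proof.
move=> kn hc hN hM.
have nk : forall a, (n <= a)%N -> a <> k by move=> a ha ak; lia.
rewrite (T_conj (N := N) (M := M) x (nk N hN) (nk M hM)) T_adj.
apply: le_trans (pert IP _ _ _ _) _.
rewrite -(linB (T_lin k N)) !T_hn.
have [h1 h2] := hc N M hN hM.
by apply: lerD; [apply: ler_wpM2r; [exact: hnorm_ge0|exact: h1]
                |apply: ler_wpM2l; [exact: hnorm_ge0|exact: h2]].
Qed.

Lemma wot_exists x : exists v, forall y e, 0 < e -> exists N0, forall N,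
  (N0 <= N)%N -> N <> k -> nc (ip (T k N x) y - ip v y) < e.
Proof.
have [v hv] := S_lim x; exists v => y e e0.
set hx := hn x; set hy := hn y.
have hx0 : 0 <= hx := hnorm_ge0 ip x.
have hy0 : 0 <= hy := hnorm_ge0 ip y.
have h1 : 0 < 3%:R * (hx + hy + 1).
  by rewrite mulr_gt0 ?ltr0n // ltr_wpDl ?ltr01 // addr_ge0.
set d := e / (3%:R * (hx + hy + 1)).
have d0 : 0 < d by rewrite divr_gt0.
have hd : d * (3%:R * (hx + hy + 1)) = e by rewrite mulfVK // gt_eqF.
have [n [kn hc]] := cont2 x y d0.
exists n => N hN _.
set b := hx * hy + hx * hy; set Nn := (n.+1%:R : R).
have b0 : 0 <= b by rewrite addr_ge0 // mulr_ge0.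
have avg : forall m, (0 < m)%N ->
    nc (ip (S x m) y - ip (T k N x) y) <= (d * hy + hx * d) + b * Nn / m%:R.
  move=> m m0; rewrite ipSy.
  apply: (avg1 (f := fun i => ip (T k (k.+1 + i) x) y) (p := 0%N)) => //.
    by rewrite addr_ge0 // mulr_ge0 // ltW.
  move=> i; case: (ltnP i n) => hi.
    apply: le_trans (_ : b <= _).
      apply: le_trans (ncD _ _) _; rewrite ncN.
      by apply: lerD; apply: le_trans (CS IP _ _) _; rewrite T_hn.
    rewrite /= -[b in b <= _]add0r; apply: lerD.
      by rewrite addr_ge0 // mulr_ge0 // ltW.
    by rewrite -[b in b <= _]mulr1 ler_wpM2l // lerDl ler0n.
  apply: le_trans (a_step kn hc hN _) _.
    by apply: leq_trans hi _; rewrite addnC leq_addr.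
  by rewrite lerDl mulr_ge0 // add0r ler0n.
have h2 : 0 < 3%:R * (hy + 1) by rewrite mulr_gt0 ?ltr0n // ltr_wpDl ?ltr01.
set et := e / (3%:R * (hy + 1)).
have et0 : 0 < et by rewrite divr_gt0.
have het : et * (3%:R * (hy + 1)) = e by rewrite mulfVK // gt_eqF.
have [M1 hM1] := hv et et0.
set r := 3%:R * (b * Nn) / e.
have r0 : 0 <= r.
  by apply: divr_ge0; [apply: mulr_ge0; rewrite ?ler0n ?mulr_ge0|apply: ltW].
set M2 := (Num.Def.archi_bound r).+1.
set m := maxn M1 M2.
have m0 : (0 < m)%N by rewrite leq_max orbT.
have rm : r < m%:R.
  apply: lt_le_trans (archi_boundP r0) _; rewrite ler_nat.
  by apply: leq_trans (leqnSn _) _; rewrite leq_max leqnn orbT.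
have mpos : 0 < (m%:R : R) by rewrite ltr0n.
have hu : 3%:R * (b * Nn / m%:R) < e.
  by move: rm; rewrite /r ltr_pdivrMr // => h; rewrite mulrA ltr_pdivrMr // [e * _]mulrC.
have hS := hM1 m (leq_maxl _ _).
have h3 : nc (ip (S x m) y - ip v y) <= et * hy.
  rewrite -(ipBl IP); apply: le_trans (CS IP _ _) _.
  by apply: ler_wpM2r => //; apply: ltW.
have h4 := avg m m0.
have : nc (ip (T k N x) y - ip v y) <=
    nc (ip (S x m) y - ip (T k N x) y) + nc (ip (S x m) y - ip v y).
  have -> : ip (T k N x) y - ip v y =
    - (ip (S x m) y - ip (T k N x) y) + (ip (S x m) y - ip v y).
    by rewrite opprB addrA subrK.
  by apply: le_trans (ncD _ _) _; rewrite ncN.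
have hd' : 3%:R * (d * hx) + 3%:R * (d * hy) + 3%:R * d = e by rewrite -hd; ring.
have het' : 3%:R * (et * hy) + 3%:R * et = e by rewrite -het; ring.
set u := b * Nn / m%:R in h4 hu.
lra.
Qed.

Lemma O_exists : exists O : H -> H, forall x y e, 0 < e -> exists N0, forall N,
  (N0 <= N)%N -> N <> k -> nc (ip (T k N x) y - ip (O x) y) < e.
Proof.
exists (fun x => proj1_sig (constructive_indefinite_description _ (wot_exists x))).
by move=> x; case: (constructive_indefinite_description _ (wot_exists x)).
Qed.

Variable O : H -> H.
Hypothesis W : forall x y e, 0 < e -> exists N0, forall N,
  (N0 <= N)%N -> N <> k -> nc (ip (T k N x) y - ip (O x) y) < e.

Lemma big_ne (a b c : nat) : (a + b + c + k.+1)%N <> k.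
Proof. lia. Qed.

Lemma O_sa x y : ip (O x) y = ip x (O y).
Proof.
apply/eqP; rewrite -subr_eq0; apply/eqP; apply: (small_eq0 (R := R)) => e e0.
have e2 : 0 < e / 2%:R by rewrite divr_gt0.
have [N1 h1] := W x y e2; have [N2 h2] := W y x e2.
set N := (N1 + N2 + 0 + k.+1)%N.
have := h1 N ltac:(rewrite /N; lia) ltac:(rewrite /N; lia).
have := h2 N ltac:(rewrite /N; lia) ltac:(rewrite /N; lia).
rewrite -ncJ conjcB -!(ipJ IP) -T_adj => hb ha.
have -> : ip (O x) y - ip x (O y) =
  - (ip (T k N x) y - ip (O x) y) + (ip (T k N x) y - ip x (O y)).
  by rewrite opprB addrA subrK.
apply: le_lt_trans (ncD _ _) _; rewrite ncN.
have : nc (ip (T k N x) y - ip (O x) y) + nc (ip (T k N x) y - ip x (O y)) < e / 2%:R + e / 2%:R.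
  exact: ltrD.
by rewrite -splitr.
Qed.

Lemma O_lin : is_linear_op O.
Proof.
move=> a x x'; apply: (ip_ext IP) => y.
apply/eqP; rewrite -subr_eq0; apply/eqP; apply: (small_eq0 (R := R)) => e e0.
set na := nc a.
have na0 : 0 <= na := nc_ge0 a.
have h3 : 0 < 3%:R * (na + 1) by rewrite mulr_gt0 ?ltr0n // ltr_wpDl ?ltr01.
set e' := e / (3%:R * (na + 1)).
have e'0 : 0 < e' by rewrite divr_gt0.
have he : e' * (3%:R * (na + 1)) = e by rewrite mulfVK // gt_eqF.
have [N1 h1] := W (a *: x + x') y e'0.
have [N2 h2] := W x y e'0; have [N3 h3'] := W x' y e'0.
set N := (N1 + N2 + N3 + k.+1)%N.
have := h1 N ltac:(rewrite /N; lia) ltac:(rewrite /N; lia).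
have := h2 N ltac:(rewrite /N; lia) ltac:(rewrite /N; lia).
have := h3' N ltac:(rewrite /N; lia) ltac:(rewrite /N; lia).
rewrite (T_lin k N) (ipDl IP) (ipZl IP) (ipDl IP) (ipZl IP).
move=> c3 c2 c1.
set u := ip (T k N x) y in c2 c1; set u' := ip (T k N x') y in c3 c1.
set p := ip (O x) y in c2 *; set p' := ip (O x') y in c3 *.
set z := ip (O (a *: x + x')) y in c1 *.
have -> : z - (a * p + p') = - (a * u + u' - z) + a * (u - p) + (u' - p').
  by ring.
apply: le_lt_trans (ncD _ _) _; apply: le_lt_trans (lerD (ncD _ _) (lexx _)) _.
rewrite ncN ncM.
have c2' : na * nc (u - p) <= na * e' by apply: ler_wpM2l => //; apply: ltW.
have he' : 3%:R * (e' * na) + 3%:R * e' = e by rewrite -he; ring.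
rewrite -/na; have : 0 <= e' * na by rewrite mulr_ge0 // ltW.
lra.
Qed.

Lemma O_idem x : O (O x) = O x.
Proof.
apply: (ip_ext IP) => y; rewrite O_sa.
apply/eqP; rewrite -subr_eq0; apply/eqP; apply: (small_eq0 (R := R)) => e e0.
set hx := hn x.
have hx0 : 0 <= hx := hnorm_ge0 ip x.
have e4 : 0 < e / 4%:R by rewrite divr_gt0.
set f := e / 4%:R.
have h1 : 0 < hx + 1 by rewrite ltr_wpDl ?ltr01.
set dl := f / (hx + 1).
have dl0 : 0 < dl by rewrite divr_gt0.
have hdl : dl * (hx + 1) = f by rewrite mulfVK // gt_eqF.
have [n [kn hc]] := cont' y dl0.
have [N1 w1] := W x (O y) e4.
set N := (N1 + n + 0 + k.+1)%N.
have hNk : N <> k by rewrite /N; lia.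
have hNn : (n <= N)%N by rewrite /N; lia.
have [N2 w2] := W y (T k N x) e4.
have [N3 w3] := W y x e4.
set M := (N2 + N3 + N + k.+1)%N.
have hMk : M <> k by rewrite /M; lia.
have hMn : (n <= M)%N by rewrite /M; lia.
have hNM : N <> M by rewrite /M; lia.
have t1 := w1 N ltac:(rewrite /N; lia) hNk.
have t2 := w2 M ltac:(rewrite /M; lia) hMk.
have t4 := w3 M ltac:(rewrite /M; lia) hMk.
rewrite ncB in t1.
rewrite -ncJ conjcB -!(ipJ IP) in t2.
rewrite -ncJ conjcB -!(ipJ IP) in t4.
rewrite T_adj T_sigma // in t2.
have t3 : nc (ip x (T k M (T N M y)) - ip x (T k M y)) <= hx * dl.
  rewrite -(ipBr IP) -(linB (T_lin k M)); apply: le_trans (CS IP _ _) _.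
  by rewrite T_hn; apply: ler_wpM2l => //; apply: hc.
rewrite -O_sa in t4.
set A := ip (O x) (O y) in t1 *; set B := ip (T k N x) (O y) in t1 t2.
set Cc := ip x (T k M (T N M y)) in t2 t3.
set D := ip x (T k M y) in t3 t4; set E := ip (O x) y in t4 *.
have -> : A - E = (A - B) + (B - Cc) + (Cc - D) + (D - E) by ring.
apply: le_lt_trans (ncD _ _) _; apply: le_lt_trans (lerD (ncD _ _) (lexx _)) _.
apply: le_lt_trans (lerD (lerD (ncD _ _) (lexx _)) (lexx _)) _.
rewrite (ncB B).
have hdl' : dl * hx + dl = f by rewrite -hdl; ring.
have hf : f * 4%:R = e by rewrite /f mulfVK // pnatr_eq0.
lra.
Qed.

End Main.

End Aux.

Theorem lemma4 (R : realType) (H : lmodType R[i]) (ip : H -> H -> R[i])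
    (K : (nat -> nat) -> H -> H) (k : nat) :
  is_hilbert ip -> unitary_rep ip K -> rep_continuous ip K ->
  exists O : H -> H, sa_projection ip O /\
    wot_converges_away ip k (fun N => K (transp k N)) O.
Proof.
move=> [IP HC] REP CONT.
have [O hO] := Aux.O_exists k IP HC REP CONT.
exists O; split.
  split.
  - exact: (Aux.O_lin IP REP hO).
  - exact: (Aux.O_idem IP REP CONT hO).
  - exact: (Aux.O_sa IP REP hO).
move=> x y e e0; have [N0 h] := hO x y e e0.
exists N0 => N hN /eqP hk; apply: Aux.nc_lt_C; exact: h.
Qed.
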